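(* Let $\Omega\subseteq\mathbb{R}^n$ be open, let $\mathcal{F}\subseteq\mathbb{H}(\Omega)$, and define $\varphi,\psi:\Omega\to\overline{\mathbb{R}}$ by $\varphi(x)=\inf\{z\in f(x):f\in\mathcal{F}\}$ and $\psi(x)=\sup\{z\in f(x):f\in\mathcal{F}\}$. Then $\inf\mathcal{F}=F(I(\varphi))$ and $\sup\mathcal{F}=F(S(\psi))$, where the infimum and supremum are taken in $\mathbb{H}(\Omega)$ with respect to $\le$.
   Context: $\overline{\mathbb{R}}=\mathbb{R}\cup\{\pm\infty\}$, $\mathbb{I}\overline{\mathbb{R}}$ is the set of closed intervals $[\underline a,\overline a]$ with $\underline a\le\overline a$ in $\overline{\mathbb{R}}$, $a\in\overline{\mathbb{R}}$ identified with $[a,a]$. $\mathbb{A}(\Omega)$ is the set of functions $\Omega\to\mathbb{I}\overline{\mathbb{R}}$. Partial order: $[\underline a,\overline a]\le[\underline b,\overline b]$ iff $\underline a\le\underline b$ and $\overline a\le\overline b$; $f\le g$ iff $f(x)\le g(x)$ for all $x$. $B_\delta(x)=\{y\in\Omega:\|x-y\|<\delta\}$. For $f\in\mathbb{A}(\Omega)$: $I(f)(x)=\sup_{\delta>0}\inf\{z\in f(y):y\in B_\delta(x)\}$, $S(f)(x)=\inf_{\delta>0}\sup\{z\in f(y):y\in B_\delta(x)\}$, $F(f)(x)=[I(f)(x),S(f)(x)]$. $f$ is H-continuous if for every $g\in\mathbb{A}(\Omega)$ with $g(x)\subseteq f(x)$ for all $x$ one has $F(g)=f$; $\mathbb{H}(\Omega)$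 is the set of H-continuous functions (it is order complete with respect to $\le$). *)

(* Defs.v *)
From HB Require Import structures.
From mathcomp Require Import all_boot all_order all_algebra.
From mathcomp Require Import all_classical all_reals all_analysis.
Set Implicit Arguments. Unset Strict Implicit. Unset Printing Implicit Defensive.
Import Order.TTheory GRing.Theory Num.Theory.
Local Open Scope classical_set_scope.
Local Open Scope ring_scope.

Section Hcont.
Variables (R : realType) (n : nat).

Notation pt := 'rV[R]_n.

Definition edist (x y : pt) : R :=
  Num.sqrt (\sum_(i < n) (x ord0 i - y ord0 i) ^+ 2).

Definition Bd (Om : set pt) (delta : R) (x : pt) : set pt :=
  [set y | Om y /\ edist x y < delta].

Definition eopen (Om : set pt) : Prop :=
  forall x, Om x -> exists2 delta : R, 0 < delta & forall y, edist x y < delta -> Om y.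

(* an extended interval [a.1, a.2]; functions Omega -> I Rbar are represented as
   total functions pt -> \bar R * \bar R, only their values on Omega matter *)
Definition ival := (\bar R * \bar R)%type.

Definition in_ival (z : \bar R) (a : ival) : Prop := (a.1 <= z)%E /\ (z <= a.2)%E.

Definition isA (Om : set pt) (f : pt -> ival) : Prop :=
  forall x, Om x -> ((f x).1 <= (f x).2)%E.

Definition degen (phi : pt -> \bar R) : pt -> ival := fun x => (phi x, phi x).

Definition Iop (Om : set pt) (f : pt -> ival) (x : pt) : \bar R :=
  ereal_sup [set ereal_inf [set z | exists2 y, Bd Om delta x y & in_ival z (f y)]
            | delta in [set d : R | 0 < d]].

Definition Sop (Om : set pt) (f : pt -> ival) (x : pt) : \bar R :=
  ereal_inf [set ereal_sup [set z | exists2 y, Bd Om delta x y & in_ival z (f y)]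
            | delta in [set d : R | 0 < d]].

Definition Fop (Om : set pt) (f : pt -> ival) : pt -> ival :=
  fun x => (Iop Om f x, Sop Om f x).

Definition eqOn (Om : set pt) (f g : pt -> ival) : Prop := forall x, Om x -> f x = g x.

Definition leA (Om : set pt) (f g : pt -> ival) : Prop :=
  forall x, Om x -> ((f x).1 <= (g x).1)%E /\ ((f x).2 <= (g x).2)%E.

Definition Hcont (Om : set pt) (f : pt -> ival) : Prop :=
  isA Om f /\
  forall g, isA Om g ->
    (forall x, Om x -> forall z, in_ival z (g x) -> in_ival z (f x)) ->
    eqOn Om (Fop Om g) f.

Definition is_infH (Om : set pt) (FF : set (pt -> ival)) (h : pt -> ival) : Prop :=
  [/\ Hcont Om h, (forall f, FF f -> leA Om h f) &
      (forall g, Hcont Om g -> (forall f, FF f -> leA Om g f) -> leA Om g h)].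

Definition is_supH (Om : set pt) (FF : set (pt -> ival)) (h : pt -> ival) : Prop :=
  [/\ Hcont Om h, (forall f, FF f -> leA Om f h) &
      (forall g, Hcont Om g -> (forall f, FF f -> leA Om f g) -> leA Om h g)].

Definition phiF (FF : set (pt -> ival)) (x : pt) : \bar R :=
  ereal_inf [set z | exists2 f, FF f & in_ival z (f x)].
Definition psiF (FF : set (pt -> ival)) (x : pt) : \bar R :=
  ereal_sup [set z | exists2 f, FF f & in_ival z (f x)].

End Hcont.

(* Main.v *)
Require Import Defs.
From HB Require Import structures.
From mathcomp Require Import all_boot all_order all_algebra.
From mathcomp Require Import all_classical all_reals all_analysis.
From mathcomp Require Import ring lra.
Set Implicit Arguments. Unset Strict Implicit. Unset Printing Implicit Defensive.
Import Order.TTheory GRing.Theory Num.Theory.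
Local Open Scope classical_set_scope.
Local Open Scope ring_scope.

Section Tri.
Variables (R : realType) (n : nat).

Lemma cs_ineq (a b : 'I_n -> R) :
  (\sum_i a i * b i) ^+ 2 <= (\sum_i a i ^+ 2) * (\sum_i b i ^+ 2).
Proof.
have AB : (\sum_i a i ^+ 2) * (\sum_i b i ^+ 2) =
   \sum_i \sum_j (a i ^+ 2 * b j ^+ 2).
  by rewrite big_distrl; apply: eq_bigr => i _; rewrite big_distrr.
have BA : (\sum_i a i ^+ 2) * (\sum_i b i ^+ 2) =
   \sum_i \sum_j (a j ^+ 2 * b i ^+ 2).
  rewrite mulrC big_distrl; apply: eq_bigr => i _; rewrite big_distrr.
  by apply: eq_bigr => j _; rewrite mulrC.
have SS : (\sum_i a i * b i) ^+ 2 = \sum_i \sum_j ((a i * b i) * (a j * b j)).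
  by rewrite expr2 big_distrl; apply: eq_bigr => i _; rewrite big_distrr.
have key : 0 <= \sum_i \sum_j (a i * b j - a j * b i) ^+ 2.
  by apply: sumr_ge0 => i _; apply: sumr_ge0 => j _; exact: sqr_ge0.
have E : \sum_i \sum_j (a i * b j - a j * b i) ^+ 2 =
   \sum_i \sum_j (a i ^+ 2 * b j ^+ 2) + \sum_i \sum_j (a j ^+ 2 * b i ^+ 2)
   - (\sum_i \sum_j ((a i * b i) * (a j * b j))) *+ 2.
  rewrite -sumrMnl -big_split -sumrB /=; apply: eq_bigr => i _.
  rewrite -sumrMnl -big_split -sumrB /=; apply: eq_bigr => j _.
  ring.
rewrite E -AB -BA -SS in key.
lra.
Qed.

Lemma edist_triangle (x y z : 'rV[R]_n) : Defs.edist x z <= Defs.edist x y + Defs.edist y z.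
Proof.
rewrite /Defs.edist.
pose a := fun i : 'I_n => x ord0 i - y ord0 i.
pose b := fun i : 'I_n => y ord0 i - z ord0 i.
have -> : \sum_(i < n) (x ord0 i - z ord0 i) ^+ 2 = \sum_i (a i + b i) ^+ 2.
  by apply: eq_bigr => i _; rewrite /a /b; congr (_ ^+ 2); ring.
rewrite -/(\sum_(i < n) a i ^+ 2) -/(\sum_(i < n) b i ^+ 2).
have A0 : 0 <= \sum_i a i ^+ 2 by apply: sumr_ge0 => i _; exact: sqr_ge0.
have B0 : 0 <= \sum_i b i ^+ 2 by apply: sumr_ge0 => i _; exact: sqr_ge0.
set A := \sum_i a i ^+ 2. set B := \sum_i b i ^+ 2.
have C : \sum_i (a i + b i) ^+ 2 = A + B + (\sum_i a i * b i) *+ 2.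
  rewrite /A /B -sumrMnl -!big_split /=; apply: eq_bigr => i _; ring.
have S1 : \sum_i a i * b i <= Num.sqrt A * Num.sqrt B.
  rewrite -sqrtrM //; apply: le_trans (ler_norm _) _.
  rewrite -sqrtr_sqr ler_sqrt ?mulr_ge0 //; exact: cs_ineq.
have sA := sqrtr_ge0 A; have sB := sqrtr_ge0 B.
rewrite -(@ger0_norm _ (Num.sqrt A + Num.sqrt B)) ?addr_ge0 //.
rewrite -sqrtr_sqr ler_sqrt ?sqr_ge0 // C.
rewrite sqrrD !sqr_sqrtr //. lra.
Qed.

Lemma edist_refl (x : 'rV[R]_n) : Defs.edist x x = 0.
Proof.
rewrite /Defs.edist big1 ?sqrtr0 // => i _; by rewrite subrr expr0n.
Qed.

Variable Om : set 'rV[R]_n.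
Local Notation pt := 'rV[R]_n.
Local Notation ivl := (\bar R * \bar R)%type.
Local Notation Ip w := (Iop Om (degen w)).
Local Notation Sp w := (Sop Om (degen w)).

Lemma in_degen (w : pt -> \bar R) y z : in_ival z (degen w y) -> z = w y.
Proof. by case=> /= h1 h2; apply: le_anti; rewrite h1 h2. Qed.

Lemma in_degen_refl (w : pt -> \bar R) y : in_ival (w y) (degen w y).
Proof. by split. Qed.

Lemma Iop_mono (f g : pt -> ivl) x :
  (forall y, Om y -> forall z, in_ival z (g y) ->
     exists2 z', in_ival z' (f y) & (z' <= z)%E) ->
  (Iop Om f x <= Iop Om g x)%E.
Proof.
move=> H; apply: ge_ereal_sup => _ [d d0 <-].
apply: le_ereal_sup_tmp; eexists; first by exists d.
apply: le_ereal_inf_tmp => z [y By zg].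
have [z' z'f le] := H y By.1 z zg.
by apply: ge_ereal_inf; exists z' => //; exists y.
Qed.

Lemma Sop_mono (f g : pt -> ivl) x :
  (forall y, Om y -> forall z, in_ival z (g y) ->
     exists2 z', in_ival z' (f y) & (z <= z')%E) ->
  (Sop Om g x <= Sop Om f x)%E.
Proof.
move=> H; apply: le_ereal_inf_tmp => _ [d d0 <-].
apply: ge_ereal_inf; eexists; first by exists d.
apply: ge_ereal_sup => z [y By zg].
have [z' z'f le] := H y By.1 z zg.
by apply: le_ereal_sup_tmp; exists z' => //; exists y.
Qed.

Lemma Iop_le (f : pt -> ivl) x z : Om x -> in_ival z (f x) -> (Iop Om f x <= z)%E.
Proof.
move=> Ox zf; apply: ge_ereal_sup => _ [d d0 <-].
by apply: ereal_inf_lbound; exists x => //; split => //; rewrite edist_refl.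
Qed.

Lemma Sop_ge (f : pt -> ivl) x z : Om x -> in_ival z (f x) -> (z <= Sop Om f x)%E.
Proof.
move=> Ox zf; apply: le_ereal_inf_tmp => _ [d d0 <-].
by apply: ereal_sup_ubound; exists x => //; split => //; rewrite edist_refl.
Qed.

Lemma Ip_mono (w1 w2 : pt -> \bar R) x :
  (forall y, Om y -> (w1 y <= w2 y)%E) -> (Ip w1 x <= Ip w2 x)%E.
Proof.
move=> H; apply: Iop_mono => y Oy z /in_degen ->.
by exists (w1 y); [exact: in_degen_refl | exact: H].
Qed.

Lemma Sp_mono (w1 w2 : pt -> \bar R) x :
  (forall y, Om y -> (w1 y <= w2 y)%E) -> (Sp w1 x <= Sp w2 x)%E.
Proof.
move=> H; apply: Sop_mono => y Oy z /in_degen ->.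
by exists (w2 y); [exact: in_degen_refl | exact: H].
Qed.

Lemma Ip_ext (w1 w2 : pt -> \bar R) x :
  (forall y, Om y -> w1 y = w2 y) -> Ip w1 x = Ip w2 x.
Proof.
by move=> H; apply: le_anti; rewrite !Ip_mono // => y Oy; rewrite H.
Qed.

Lemma Sp_ext (w1 w2 : pt -> \bar R) x :
  (forall y, Om y -> w1 y = w2 y) -> Sp w1 x = Sp w2 x.
Proof.
by move=> H; apply: le_anti; rewrite !Sp_mono // => y Oy; rewrite H.
Qed.

Lemma half_lt (d a b : R) : 0 < d -> a < d / 2 -> b < d / 2 -> a + b < d.
Proof. move=> *; lra. Qed.

Lemma Ip_idem (w : pt -> \bar R) x : (Ip w x <= Ip (Ip w) x)%E.
Proof.
apply: ge_ereal_sup => _ [d d0 <-].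
have d20 : 0 < d / 2 by apply: divr_gt0.
apply: le_ereal_sup_tmp; eexists; first by exists (d / 2).
apply: le_ereal_inf_tmp => z [y [Oy dxy] /in_degen ->].
apply: le_ereal_sup_tmp; eexists; first by exists (d / 2).
apply: ereal_inf_le_tmp => z' [y' [Oy' dyy'] zin].
exists y' => //; split => //.
exact: le_lt_trans (edist_triangle x y y') (half_lt d0 dxy dyy').
Qed.

Lemma Sp_idem (w : pt -> \bar R) x : (Sp (Sp w) x <= Sp w x)%E.
Proof.
apply: le_ereal_inf_tmp => _ [d d0 <-].
have d20 : 0 < d / 2 by apply: divr_gt0.
apply: ge_ereal_inf; eexists; first by exists (d / 2).
apply: ge_ereal_sup => z [y [Oy dxy] /in_degen ->].
apply: ge_ereal_inf; eexists; first by exists (d / 2).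
apply: ereal_sup_le => z' [y' [Oy' dyy'] zin].
exists y' => //; split => //.
exact: le_lt_trans (edist_triangle x y y') (half_lt d0 dxy dyy').
Qed.

Lemma Hcont_lo (f : pt -> ivl) x : Hcont Om f -> Om x ->
  Ip (fun y => (f y).1) x = (f x).1 /\ Sp (fun y => (f y).1) x = (f x).2.
Proof.
move=> [fA Hf] Ox.
have incl : forall y, Om y -> forall z, in_ival z (degen (fun y => (f y).1) y) -> in_ival z (f y).
  by move=> y Oy z /in_degen ->; split => //; exact: fA.
have E := Hf (degen (fun y => (f y).1)) (fun y _ => lexx _) incl x Ox.
by rewrite -E.
Qed.

Lemma Hcont_hi (f : pt -> ivl) x : Hcont Om f -> Om x ->
  Ip (fun y => (f y).2) x = (f x).1 /\ Sp (fun y => (f y).2) x = (f x).2.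
Proof.
move=> [fA Hf] Ox.
have incl : forall y, Om y -> forall z, in_ival z (degen (fun y => (f y).2) y) -> in_ival z (f y).
  by move=> y Oy z /in_degen ->; split => //; exact: fA.
have E := Hf (degen (fun y => (f y).2)) (fun y _ => lexx _) incl x Ox.
by rewrite -E.
Qed.


Variable FF : set (pt -> ivl).
Hypothesis HF : FF `<=` Hcont Om.

Lemma inf_part : is_infH Om FF (Fop Om (degen (Ip (phiF FF)))).
Proof.
set phi := phiF FF; set u := Ip phi.
have F1 : forall f x, FF f -> Om x -> (phi x <= (f x).1)%E.
  move=> f x Ff Ox; apply: ereal_inf_lbound; exists f => //.
  by split => //; exact: (HF Ff).1.
have F2 : forall x, Om x -> (u x <= phi x)%E.
  by move=> x Ox; apply: Iop_le => //; exact: in_degen_refl.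
have F3 : forall x, Om x -> Ip u x = u x.
  move=> x Ox; apply: le_anti; rewrite Ip_idem andbT.
  by apply: Iop_le => //; exact: in_degen_refl.
have F3' : forall x, Ip (Ip u) x = Ip u x by move=> x; apply: Ip_ext.
have Fuf2 : forall f x, FF f -> Om x -> (Sp u x <= (f x).2)%E.
  move=> f x Ff Ox; rewrite -(Hcont_lo (HF Ff) Ox).2; apply: Sp_mono => y Oy.
  exact: le_trans (F2 y Oy) (F1 f y Ff Oy).
have F4 : forall x, Om x -> Ip (Sp u) x = Ip u x.
  move=> x Ox; apply: le_anti; apply/andP; split; last first.
    apply: Ip_mono => y Oy; apply: Sop_ge => //; exact: in_degen_refl.
  rewrite F3 //; apply: le_trans (Ip_idem _ x) _; apply: Ip_mono => y Oy.
  apply: le_ereal_inf_tmp => z [f Ff zin].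
  rewrite /in_ival in zin; apply: le_trans zin.1; rewrite -(Hcont_hi (HF Ff) Oy).1.
  apply: Ip_mono => y' Oy'; exact: Fuf2.
have F5 : forall x, Om x -> Sp (Sp u) x = Sp u x.
  move=> x Ox; apply: le_anti; rewrite Sp_idem /=.
  by apply: Sop_ge => //; exact: in_degen_refl.
split.
- split.
    move=> x Ox; rewrite /Fop /= F3 //; apply: Sop_ge => //.
  move=> g gA incl x Ox; rewrite /Fop; congr pair; apply: le_anti; apply/andP; split.
  + rewrite -F4 //; apply: Iop_mono => y Oy z /in_degen ->.
    exists (g y).1; first by split => //; exact: gA.
    apply: le_trans (gA y Oy) _.
    have [_ ] := incl y Oy (g y).2 (conj (gA y Oy) (lexx _)); done.
  + rewrite -{1}F3'; apply: Iop_mono => y Oy z zin.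
    exists (Ip u y); first exact: in_degen_refl.
    have [h _] := incl y Oy (g y).1 (conj (lexx _) (gA y Oy)).
    exact: le_trans h zin.1.
  + rewrite -F5 //; apply: Sop_mono => y Oy z zin.
    exists (Sp u y); first exact: in_degen_refl.
    have [_ h] := incl y Oy (g y).2 (conj (gA y Oy) (lexx _)).
    exact: le_trans zin.2 h.
  + rewrite -(Sp_ext x F3); apply: Sop_mono => y Oy z /in_degen ->.
    exists (g y).2; first by split => //; exact: gA.
    apply: le_trans _ (gA y Oy).
    have [h _] := incl y Oy (g y).1 (conj (lexx _) (gA y Oy)); done.
- move=> f Ff x Ox /=; split; last exact: Fuf2.
  by rewrite F3 //; apply: le_trans (F2 x Ox) (F1 f x Ff Ox).
- move=> g gH glb x Ox /=.
  have g1 : forall y, Om y -> ((g y).1 <= u y)%E.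
    move=> y Oy; rewrite -(Hcont_lo gH Oy).1; apply: Ip_mono => y' Oy'.
    apply: le_ereal_inf_tmp => z [f Ff zin].
    exact: le_trans (glb f Ff y' Oy').1 zin.1.
  split; first by rewrite F3 //; exact: g1.
  by rewrite -(Hcont_lo gH Ox).2; apply: Sp_mono.
Qed.


Lemma sup_part : is_supH Om FF (Fop Om (degen (Sp (psiF FF)))).
Proof.
set psi := psiF FF; set v := Sp psi.
have G1 : forall f x, FF f -> Om x -> ((f x).2 <= psi x)%E.
  move=> f x Ff Ox; apply: ereal_sup_ubound; exists f => //.
  by split => //; exact: (HF Ff).1.
have G2 : forall x, Om x -> (psi x <= v x)%E.
  by move=> x Ox; apply: Sop_ge => //; exact: in_degen_refl.
have G3 : forall x, Om x -> Sp v x = v x.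
  move=> x Ox; apply: le_anti; rewrite Sp_idem /=.
  by apply: Sop_ge => //; exact: in_degen_refl.
have G3' : forall x, Sp (Sp v) x = Sp v x by move=> x; apply: Sp_ext.
have Gf1 : forall f x, FF f -> Om x -> ((f x).1 <= Ip v x)%E.
  move=> f x Ff Ox; rewrite -(Hcont_hi (HF Ff) Ox).1; apply: Ip_mono => y Oy.
  exact: le_trans (G1 f y Ff Oy) (G2 y Oy).
have G4 : forall x, Om x -> Sp (Ip v) x = Sp v x.
  move=> x Ox; apply: le_anti; apply/andP; split.
    apply: Sp_mono => y Oy; apply: Iop_le => //; exact: in_degen_refl.
  rewrite G3 //; apply: le_trans _ (Sp_idem _ x); apply: Sp_mono => y Oy.
  apply: ge_ereal_sup => z [f Ff zin].
  rewrite /in_ival in zin; apply: le_trans zin.2 _; rewrite -(Hcont_lo (HF Ff) Oy).2.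
  apply: Sp_mono => y' Oy'; exact: Gf1.
have G5 : forall x, Om x -> Ip (Ip v) x = Ip v x.
  move=> x Ox; apply: le_anti; rewrite Ip_idem andbT.
  by apply: Iop_le => //; exact: in_degen_refl.
split.
- split.
    move=> x Ox; rewrite /Fop /= G3 //; apply: Iop_le => //.
  move=> g gA incl x Ox; rewrite /Fop; congr pair; apply: le_anti; apply/andP; split.
  + rewrite -(Ip_ext x G3); apply: Iop_mono => y Oy z /in_degen ->.
    exists (g y).1; first by split => //; exact: gA.
    apply: le_trans (gA y Oy) _.
    have [_ ] := incl y Oy (g y).2 (conj (gA y Oy) (lexx _)); done.
  + rewrite -G5 //; apply: Iop_mono => y Oy z zin.
    exists (Ip v y); first exact: in_degen_refl.
    have [h _] := incl y Oy (g y).1 (conj (lexx _) (gA y Oy)).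
    exact: le_trans h zin.1.
  + rewrite -G3'; apply: Sop_mono => y Oy z zin.
    exists (Sp v y); first exact: in_degen_refl.
    have [_ h] := incl y Oy (g y).2 (conj (gA y Oy) (lexx _)).
    exact: le_trans zin.2 h.
  + rewrite -G4 //; apply: Sop_mono => y Oy z /in_degen ->.
    exists (g y).2; first by split => //; exact: gA.
    apply: le_trans _ (gA y Oy).
    have [h _] := incl y Oy (g y).1 (conj (lexx _) (gA y Oy)); done.
- move=> f Ff x Ox /=; split; first exact: Gf1.
  by rewrite G3 //; apply: le_trans (G1 f x Ff Ox) (G2 x Ox).
- move=> g gH gub x Ox /=.
  have g2 : forall y, Om y -> (v y <= (g y).2)%E.
    move=> y Oy; rewrite -(Hcont_hi gH Oy).2; apply: Sp_mono => y' Oy'.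
    apply: ge_ereal_sup => z [f Ff zin].
    exact: le_trans zin.2 (gub f Ff y' Oy').2.
  split; last by rewrite G3 //; exact: g2.
  by rewrite -(Hcont_hi gH Ox).1; apply: Ip_mono.
Qed.

End Tri.

Theorem theorem9 (R : realType) (n : nat) (Om : set 'rV[R]_n)
  (FF : set ('rV[R]_n -> (\bar R * \bar R)%type)) :
  eopen Om ->
  FF `<=` Hcont Om ->
  is_infH Om FF (Fop Om (degen (Iop Om (degen (phiF FF))))) /\
  is_supH Om FF (Fop Om (degen (Sop Om (degen (psiF FF))))).
Proof. by move=> _ HF; split; [exact: inf_part | exact: sup_part]. Qed.
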